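(* Let $f:\mathbb{R}^d\to\mathbb{R}$ be $L$-smooth. Let $X\subseteq\mathbb{R}^d$ be a set with $\mathcal{L}(X)=0$ (for example, a finite set of points), and let $W\subseteq\mathbb{R}^d$ be a set with $\mathcal{L}(W)>0$. Run gradient descent $x_t=x_{t-1}-\gamma\nabla f(x_{t-1})$, $t=1,2,\dots$, with learning rate $\gamma\le\frac{1}{2L}$ and $x_0$ drawn uniformly at random from $W$. Then the probability that $x_t\in X$ for some $t$ during training is $0$.
   Context: $\mathcal{L}(S)$ denotes the Lebesgue measure of $S\subseteq\mathbb{R}^d$. A function $f$ is $L$-smooth if it is differentiable and there is a constant $L>0$ with $\|\nabla f(x)-\nabla f(y)\|\le L\|x-y\|$ for all $x,y\in\mathbb{R}^d$. ''Random initialization over $W$'' means $x_0$ is sampled uniformly from $W$. *)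

(* Defs.v *)
(* R^d is rendered as row vectors 'rV[R]_d. *)
From HB Require Import structures.
From mathcomp Require Import all_boot all_order all_algebra.
From mathcomp Require Import all_classical all_reals all_analysis.
Set Implicit Arguments. Unset Strict Implicit. Unset Printing Implicit Defensive.
Import Order.TTheory GRing.Theory Num.Theory.
Import numFieldNormedType.Exports.
Local Open Scope classical_set_scope.
Local Open Scope ring_scope.

Section Defs.
Variables (R : realType) (d : nat).

(* Euclidean norm on R^d (MathComp's built-in norm on 'rV is the sup norm). *)
Definition enorm (v : 'rV[R]_d) : R := Num.sqrt (\sum_(i < d) v ord0 i ^+ 2).

Definition grad (f : 'rV[R]_d -> R) (x : 'rV[R]_d) : 'rV[R]_d :=
  \row_(i < d) ('d f x) (delta_mx ord0 i).

Definition L_smooth (f : 'rV[R]_d -> R) (L : R) : Prop :=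
  [/\ forall x, differentiable f x,
      0 < L &
      forall x y, enorm (grad f x - grad f y) <= L * enorm (x - y)].

Definition box (a b : 'rV[R]_d) : set 'rV[R]_d :=
  [set x | forall i, a ord0 i <= x ord0 i <= b ord0 i].

Definition box_vol (a b : 'rV[R]_d) : R :=
  \prod_(i < d) Num.max 0 (b ord0 i - a ord0 i).

Definition lebesgue_outer (A : set 'rV[R]_d) : \bar R :=
  ereal_inf [set s | exists a b : nat -> 'rV[R]_d,
     A `<=` \bigcup_k box (a k) (b k) /\
     s = (\sum_(0 <= k <oo) (box_vol (a k) (b k))%:E)%E].

Definition lebesgue_measurable (A : set 'rV[R]_d) : Prop :=
  forall E, lebesgue_outer E = (lebesgue_outer (E `&` A) + lebesgue_outer (E `&` ~` A))%E.

(* Probability of event E when x_0 is drawn uniformly from W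
   (W measurable, 0 < L(W) < +oo): L(E /\ W) / L(W). *)
Definition gd_uniform_prob (W E : set 'rV[R]_d) : \bar R :=
  (lebesgue_outer (E `&` W) * ((fine (lebesgue_outer W))^-1)%:E)%E.

Definition gd (f : 'rV[R]_d -> R) (gamma : R) (x0 : 'rV[R]_d) (t : nat) : 'rV[R]_d :=
  iter t (fun x => x - gamma *: grad f x) x0.

End Defs.

(* Main.v *)
Require Import Defs.
From HB Require Import structures.
From mathcomp Require Import all_boot all_order all_algebra.
From mathcomp Require Import all_classical all_reals all_analysis.
From mathcomp Require Import ring lra.
Import Order.TTheory GRing.Theory Num.Theory.
Import numFieldNormedType.Exports.
Local Open Scope classical_set_scope.
Local Open Scope ring_scope.

Section P1.
Variables (R : realType) (d : nat).
Local Notation V := 'rV[R]_d.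
Local Notation outer := (@lebesgue_outer R d).
Local Notation vol := (@box_vol R d).

Lemma vol_ge0 (a b : V) : 0 <= vol a b.
Proof. by apply: prodr_ge0 => i _; rewrite le_max lexx. Qed.

Lemma outer_ge0 (A : set V) : (0 <= outer A)%E.
Proof.
apply: le_ereal_inf_tmp => _ [a [b [_ ->]]].
by apply: nneseries_ge0 => k _; rewrite lee_fin vol_ge0.
Qed.

Lemma outer_le_cover (A : set V) (a b : nat -> V) :
  A `<=` \bigcup_k box (a k) (b k) ->
  (outer A <= \sum_(0 <= k <oo) (vol (a k) (b k))%:E)%E.
Proof. by move=> H; apply: ereal_inf_lbound; exists a, b. Qed.

Lemma outer_mono (A B : set V) : A `<=` B -> (outer A <= outer B)%E.
Proof.
move=> AB; apply: le_ereal_inf_tmp => _ [a [b [Bc ->]]].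
apply: outer_le_cover; exact: subset_trans Bc.
Qed.

Lemma null_of_small (A : set V) :
  (forall e : R, 0 < e -> (outer A <= e%:E)%E) -> outer A = 0%E.
Proof.
move=> H; apply/eqP; rewrite eq_le outer_ge0 andbT.
apply/lee_addgt0Pr => e e0; rewrite add0e; exact: H.
Qed.

Lemma null_cover (A : set V) (e : R) : outer A = 0%E -> 0 < e ->
  exists a b : nat -> V, A `<=` \bigcup_k box (a k) (b k) /\
     (\sum_(0 <= k <oo) (vol (a k) (b k))%:E <= e%:E)%E.
Proof.
move=> A0 e0.
have /(lb_ereal_inf_adherent e0) : ereal_inf [set s | exists a b : nat -> V,
     A `<=` \bigcup_k box (a k) (b k) /\
     s = (\sum_(0 <= k <oo) (vol (a k) (b k))%:E)%E] \is a fin_num.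
  by move: A0; rewrite /lebesgue_outer => ->.
move=> [_ [a [b [Ac ->]]]]; move: A0; rewrite /lebesgue_outer => -> lt.
by exists a, b; split => //; rewrite add0e in lt; exact: ltW.
Qed.

End P1.

Section P2.
Variables (R : realType) (d : nat).
Local Notation V := 'rV[R]_d.
Local Notation outer := (@lebesgue_outer R d).
Local Notation vol := (@box_vol R d).

Lemma outer_le_cover2 (A : set V) (a b : nat -> nat -> V) :
  A `<=` \bigcup_i \bigcup_j box (a i j) (b i j) ->
  (outer A <= \sum_(0 <= i <oo) \sum_(0 <= j <oo) (vol (a i j) (b i j))%:E)%E.
Proof.
move=> Ac.
have /card_esym/ppcard_eqP[f] := card_nat2.
pose F (p : nat * nat) := (vol (a p.1 p.2) (b p.1 p.2))%:E.
have F0 p : (0 <= F p)%E by rewrite lee_fin vol_ge0.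
apply: (@le_trans _ _ (\sum_(0 <= n <oo) F (f n))%E).
  apply: outer_le_cover => t /Ac [i _ [j _ tij]].
  exists (f^-1%FUN (i, j)) => //=.
  by rewrite /F invK ?inE.
have -> : (\sum_(0 <= n <oo) F (f n) = \esum_(p in [set: nat * nat]) F p)%E.
  rewrite -(esum_pred_image F f xpredT) ?[fun=> _]set_true//.
  by rewrite image_eq.
have -> : [set: nat * nat] = [set: nat] `*`` (fun=> [set: nat]).
  by apply/seteqP; split => -[x y].
rewrite (@eq_esum _ _ _ _ (fun k => F (k.1, k.2))); last by move=> [].
rewrite -(@esum_esum _ _ _ _ _ (fun i j => F (i, j))) //= nneseries_esumT; last first.
  by move=> n; apply: nneseries_ge0 => k _ _; exact: (F0 (n, k)).
apply: le_esum => i _; rewrite nneseries_esumT //.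
by move=> k; exact: (F0 (i, k)).
Qed.

End P2.

Section P3.
Variables (R : realType) (d : nat).
Local Notation V := 'rV[R]_d.
Local Notation outer := (@lebesgue_outer R d).
Local Notation vol := (@box_vol R d).

Lemma geo_le (e : R) (u : nat -> \bar R) : 0 <= e ->
  (forall i, 0 <= u i)%E ->
  (forall i, u i <= (e / (2 ^ i.+1)%:R)%:E)%E ->
  (\sum_(0 <= i <oo) u i <= e%:E)%E.
Proof.
move=> e0 u0 ue.
apply: (@le_trans _ _ (\sum_(0 <= i <oo) ((fun=> 0%E) i + (e / (2 ^ i.+1)%:R)%:E))%E).
  apply: lee_nneseries => [i _ _|i _]; [exact: u0 | rewrite add0e; exact: ue].
apply: le_trans (epsilon_trick _ _ _) _ => //.
by rewrite eseries0 // add0e.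
Qed.

Lemma null_bigcup (A : nat -> set V) : (forall i, outer (A i) = 0%E) ->
  outer (\bigcup_i A i) = 0%E.
Proof.
move=> A0; apply: null_of_small => e e0.
have : forall i, exists ab : (nat -> V) * (nat -> V),
    A i `<=` \bigcup_k box (ab.1 k) (ab.2 k) /\
     (\sum_(0 <= k <oo) (vol (ab.1 k) (ab.2 k))%:E <= (e / (2 ^ i.+1)%:R)%:E)%E.
  move=> i; have [|a [b [H1 H2]]] := @null_cover R d (A i) (e / (2 ^ i.+1)%:R) (A0 i).
    by apply: divr_gt0 => //; rewrite ltr0n expn_gt0.
  by exists (a, b).
move=> /choice [G HG].
apply: (@le_trans _ _ (\sum_(0 <= i <oo) \sum_(0 <= j <oo)
   (vol ((G i).1 j) ((G i).2 j))%:E)%E).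
  apply: outer_le_cover2 => t [i _ /(proj1 (HG i)) [j _ tj]].
  by exists i => //; exists j.
apply: geo_le; first exact: ltW.
  by move=> i; apply: nneseries_ge0 => k _; rewrite lee_fin vol_ge0.
by move=> i; exact: (proj2 (HG i)).
Qed.

End P3.

Section P4.
Variables (R : realType) (d : nat).
Local Notation V := 'rV[R]_d.

Definition SQ (v : V) : R := \sum_(i < d) v ord0 i ^+ 2.

Lemma SQ_ge0 (v : V) : 0 <= SQ v.
Proof. by apply: sumr_ge0 => i _; exact: sqr_ge0. Qed.

Lemma coord_le_SQ (v : V) (i : 'I_d) : v ord0 i ^+ 2 <= SQ v.
Proof.
rewrite /SQ (bigD1 i) //= lerDl; apply: sumr_ge0 => j _; exact: sqr_ge0.
Qed.

Lemma SQ_le_bound (v : V) (m : R) : (forall i, `|v ord0 i| <= m) -> SQ v <= d%:R * m ^+ 2.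
Proof.
move=> H; apply: (@le_trans _ _ (\sum_(i < d) m ^+ 2)).
  apply: ler_sum => i _; move: (H i); rewrite ler_norml => /andP[h1 h2]; nra.
by rewrite sumr_const card_ord mulr_natl.
Qed.

Variables (f : V -> R) (L gamma : R).
Hypotheses (Hs : L_smooth f L) (g0 : 0 < gamma) (gL : gamma <= 1 / (2 * L)).

Definition Tmap (x : V) : V := x - gamma *: grad f x.

Lemma key_ineq (x y : V) : SQ (x - y) <= 4 * SQ (Tmap x - Tmap y).
Proof.
case: Hs => _ L0 Lip.
have gL' : gamma * L <= 1 / 2.
  move: gL; rewrite ler_pdivlMr ?mulr_gt0 // => h.
  have -> : gamma * L = gamma * (2 * L) / 2 by field.
  by rewrite ler_pdivrMr //; lra.
set u := x - y; set g := grad f x - grad f y.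
have Sg : SQ g <= L ^+ 2 * SQ u.
  have := Lip x y; rewrite /enorm -/u -/g => h.
  have h0 : 0 <= Num.sqrt (SQ g) by exact: sqrtr_ge0.
  have := ler_pM h0 h0 h h.
  rewrite -expr2 sqr_sqrtr ?SQ_ge0 // => h2; apply: le_trans h2 _.
  by rewrite mulrACA -expr2 -expr2 sqr_sqrtr ?SQ_ge0.
have E : SQ (Tmap x - Tmap y) = \sum_(i < d) (u ord0 i - gamma * g ord0 i) ^+ 2.
  apply: eq_bigr => i _; rewrite /Tmap /u /g.
  rewrite !(mxE, opprB).
  have H : forall r w p q : R,
    (r - gamma * p + (gamma * q - w)) ^+ 2 = (r - w - gamma * (p - q)) ^+ 2.
    by move=> r w p q; congr (_ ^+ 2); ring.
  exact: H.
have E2 : \sum_(i < d) (u ord0 i ^+ 2 / 2 - gamma ^+ 2 * g ord0 i ^+ 2)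
    = SQ u / 2 - gamma ^+ 2 * SQ g.
  by rewrite sumrB -mulr_suml -mulr_sumr.
have H1 : SQ u / 2 - gamma ^+ 2 * SQ g <= SQ (Tmap x - Tmap y).
  rewrite E -E2; apply: ler_sum => i _.
  have := sqr_ge0 (u ord0 i - 2 * gamma * g ord0 i).
  set a := u ord0 i; set b := g ord0 i.
  have -> : (a - gamma * b) ^+ 2 = (a ^+ 2 / 2 - gamma ^+ 2 * b ^+ 2) + (a - 2 * gamma * b) ^+ 2 / 2 by field.
  move=> h; rewrite lerDl; exact: divr_ge0.
have H2 : gamma ^+ 2 * SQ g <= SQ u / 4.
  have h1 : gamma ^+ 2 * SQ g <= gamma ^+ 2 * (L ^+ 2 * SQ u).
    by apply: ler_wpM2l => //; exact: sqr_ge0.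
  apply: le_trans h1 _; rewrite mulrA -exprMn.
  have h2 : (gamma * L) ^+ 2 <= 1 / 4.
    have h3 : 0 <= gamma * L by apply: mulr_ge0; exact: ltW.
    have := ler_pM h3 h3 gL' gL'; rewrite -expr2 => h; apply: le_trans h _; lra.
  have := ler_wpM2r (SQ_ge0 u) h2; move=> h; apply: le_trans h _; lra.
have := SQ_ge0 u; lra.
Qed.

End P4.

Section P5.
Variable (R : realType).

Lemma eseries_fin (u : nat -> \bar R) (N : nat) :
  (forall k, (N <= k)%N -> u k = 0%E) ->
  (\sum_(0 <= k <oo) u k = \sum_(0 <= k < N) u k)%E.
Proof.
move=> u0; apply: lim_near_cst => //; near=> n.
have Nn : (N <= n)%N by near: n; exists N.
rewrite (@big_cat_nat _ _ _ N) //=.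
rewrite -[RHS]adde0; congr (_ + _)%E.
rewrite big_nat_cond big1 // => k /andP[/andP[Nk _] _].
exact: u0.
Unshelve. all: by end_near.
Qed.

Lemma prod_le1 (r : seq R) : all (fun x => 0 <= x) r ->
  0 <= \prod_(x <- r) x <= \prod_(x <- r) (x + 1).
Proof.
elim: r => [|s r IH] /=; first by rewrite !big_nil ler01 lexx.
move=> /andP[s0 /IH /andP[h1 h2]]; rewrite !big_cons; apply/andP; split.
  exact: mulr_ge0.
apply: ler_pM => //; lra.
Qed.

Lemma prod_ge0' (r : seq R) (t : R) : all (fun x => 0 <= x) r -> 0 <= t ->
  0 <= \prod_(x <- r) (x + t).
Proof.
move=> + t0; elim: r => [|s r IH] /=; first by rewrite big_nil ler01.
by move=> /andP[s0 /IH h]; rewrite big_cons; apply: mulr_ge0 => //; lra.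
Qed.

Lemma prod_cont (r : seq R) (t : R) : all (fun x => 0 <= x) r -> 0 <= t <= 1 ->
  \prod_(x <- r) (x + t) <= \prod_(x <- r) x + t * (size r)%:R * \prod_(x <- r) (x + 1).
Proof.
move=> + /andP[t0 t1]; elim: r => [|s r IH] /=.
  by rewrite !big_nil mulr0 mul0r addr0.
move=> /andP[s0 rp]; have {}IH := IH rp.
have /andP[Q0 QC] := @prod_le1 r rp.
have P0 := @prod_ge0' r t rp t0.
have C0 : 0 <= \prod_(x <- r) (x + 1) by exact: (@prod_ge0' r 1 rp ler01).
rewrite !big_cons.
move: IH Q0 QC P0 C0.
set P := \prod_(x <- r) (x + t).
set Q := \prod_(x <- r) x.
set C := \prod_(x <- r) (x + 1).
set n : R := (size r)%:R.
move=> IH Q0 QC P0 C0.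
have n0 : 0 <= n by rewrite /n ler0n.
have h1 : (s + t) * P <= (s + t) * (Q + t * n * C).
  by apply: ler_wpM2l => //; lra.
have h2 : t * Q <= t * C by apply: ler_wpM2l.
have h3 : t * ((s + t) * (n * C)) <= t * ((s + 1) * (n * C)).
  apply: ler_wpM2l => //; apply: ler_wpM2r; [exact: mulr_ge0 | lra].
have h4 : t * C <= t * ((s + 1) * C).
  apply: ler_wpM2l => //; rewrite -[X in X <= _]mul1r; apply: ler_wpM2r => //; lra.
rewrite -addn1 natrD -/n.
apply: le_trans h1 _.
have -> : (s + t) * (Q + t * n * C) = s * Q + t * Q + t * ((s + t) * (n * C)) by ring.
have -> : t * (n + 1%:R) * ((s + 1) * C) = t * ((s + 1) * (n * C)) + t * ((s + 1) * C) by ring.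
lra.
Qed.

End P5.

Section P6.
Variables (R : realType) (d : nat).
Local Notation V := 'rV[R]_d.
Local Notation vol := (@box_vol R d).
Variables (f : V -> R) (L gamma : R).
Hypotheses (Hs : L_smooth f L) (g0 : 0 < gamma) (gL : gamma <= 1 / (2 * L)).
Hypothesis d0 : (0 < d)%N.
Local Notation T := (@Tmap R d f gamma).

Lemma absdiff_le (a b c t : R) : c <= a <= c + t -> c <= b <= c + t ->
  `|a - b| <= t.
Proof.
move=> /andP[h1 h2] /andP[h3 h4]; rewrite ler_norml; apply/andP; split; lra.
Qed.

Lemma piece_bound (t : R) (x y c : V) : 0 <= t ->
  (forall i, c ord0 i <= T x ord0 i <= c ord0 i + t) ->
  (forall i, c ord0 i <= T y ord0 i <= c ord0 i + t) ->
  forall i, `|x ord0 i - y ord0 i| <= 2 * d%:R * t.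
Proof.
move=> t0 hx hy i.
have hb : forall j, `|(T x - T y) ord0 j| <= t.
  move=> j; rewrite mxE [(- T y) ord0 j]mxE; exact: absdiff_le (hx j) (hy j).
have S1 := @SQ_le_bound R d _ t hb.
have S2 := @key_ineq R d f L gamma Hs g0 gL x y.
have S3 := @coord_le_SQ R d (x - y) i.
have dd : 1 <= d%:R :> R by rewrite ler1n.
have S4 : (x - y) ord0 i ^+ 2 <= (2 * d%:R * t) ^+ 2.
  apply: (le_trans S3); apply: (le_trans S2).
  have -> : (2 * d%:R * t) ^+ 2 = 4 * (d%:R * t ^+ 2) * d%:R by ring.
  have h : 0 <= d%:R * t ^+ 2 :> R by apply: mulr_ge0; [exact: ler0n | exact: sqr_ge0].
  apply: (@le_trans _ _ (4 * (d%:R * t ^+ 2))).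
    by apply: ler_wpM2l => //; lra.
  by rewrite -[X in X <= _]mulr1; apply: ler_wpM2l => //; lra.
have -> : x ord0 i - y ord0 i = (x - y) ord0 i by rewrite !mxE.
rewrite -(@ler_pXn2r _ 2) // ?nnegrE ?normr_ge0 //; last first.
  by apply: mulr_ge0 => //; apply: mulr_ge0 => //; exact: ler0n.
by rewrite real_normK ?num_real.
Qed.

End P6.

Section P7.
Variables (R : realType) (d : nat).
Local Notation V := 'rV[R]_d.
Local Notation vol := (@box_vol R d).
Hypothesis d0 : (0 < d)%N.

Definition emptyb : V * V := (const_mx 1, const_mx 0).

Lemma vol_empty : vol emptyb.1 emptyb.2 = 0.
Proof.
rewrite /box_vol (eq_bigr (fun=> 0)) => [|i _]; last first.
  by rewrite !mxE sub0r; apply/max_idPl; rewrite lerN10.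
rewrite prodr_const card_ord expr0n; by case: d d0.
Qed.

Lemma sum_ind (N nn : nat) (c : R) : (nn <= N)%N ->
  \sum_(m < N) ((m < nn)%N%:R * c) = nn%:R * c.
Proof.
move=> le; rewrite -big_distrl /=; congr (_ * _).
rewrite (eq_bigr (fun m : 'I_N => if (m < nn)%N then 1 else 0)); last first.
  by move=> m _; case: (m < nn)%N.
rewrite -big_mkcond /= -(big_ord_widen _ (fun=> (1 : R)) le).
by rewrite sumr_const card_ord.
Qed.

End P7.

Section P8.
Variables (R : realType) (d : nat).
Local Notation V := 'rV[R]_d.
Local Notation vol := (@box_vol R d).
Variables (f : V -> R) (L gamma : R).
Hypotheses (Hs : L_smooth f L) (g0 : 0 < gamma) (gL : gamma <= 1 / (2 * L)).
Hypothesis d0 : (0 < d)%N.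
Local Notation T := (@Tmap R d f gamma).

Lemma preimage_box (a b : V) (eta : R) : 0 < eta ->
  exists p q : nat -> V, T @^-1` box a b `<=` \bigcup_k box (p k) (q k) /\
   (\sum_(0 <= k <oo) (vol (p k) (q k))%:E <= (((4 * d%:R) ^+ d) * vol a b + eta)%:E)%E.
Proof.
move=> eta0.
pose s (i : 'I_d) := Num.max 0 (b ord0 i - a ord0 i).
have s0 i : 0 <= s i by rewrite le_max lexx.
pose K := (4 * d%:R) ^+ d : R.
have K0 : 0 <= K by apply: exprn_ge0; apply: mulr_ge0 => //; exact: ler0n.
pose C := \prod_(i < d) (s i + 1).
have C0 : 0 <= C by apply: prodr_ge0 => i _; have := s0 i; lra.
have KdC0 : 0 <= K * d%:R * C by apply: mulr_ge0 => //; apply: mulr_ge0 => //; exact: ler0n.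
pose th := Num.min 1 (eta / (K * d%:R * C + 1)).
have th0 : 0 < th.
  by rewrite lt_min ltr01 /=; apply: divr_gt0 => //; lra.
have th1 : th <= 1 by rewrite ge_min lexx.
have thb : K * (th * d%:R * C) <= eta.
  have h : th <= eta / (K * d%:R * C + 1) by rewrite ge_min lexx orbT.
  rewrite ler_pdivlMr in h; last by lra.
  apply: le_trans h; rewrite mulrDr mulr1 mulrC !mulrA.
  have := ltW th0; nra.
pose n (i : 'I_d) := (Num.trunc (s i / th)).+1.
have tr i := trunc_itv (divr_ge0 (s0 i) (ltW th0)).
have n_gt i : s i < (n i)%:R * th.
  by have /andP[_ h] := tr i; rewrite -ltr_pdivrMr.
have n_le i : (n i)%:R * th <= s i + th.
  have /andP[h _] := tr i; rewrite /n -addn1 natrD mulrDl mul1r lerD2r.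
  by rewrite -ler_pdivlMr.
pose M := ((\max_(i < d) n i)%N).+1.
pose F := {ffun 'I_d -> 'I_M}.
pose valid (x : F) := [forall i, (x i < n i)%N].
pose corner (x : F) : V := \row_(i < d) (a ord0 i + th * (x i)%:R).
pose Pc (x : F) := [set y : V | forall i,
   corner x ord0 i <= T y ord0 i <= corner x ord0 i + th].
pose rho := 2 * d%:R * th.
pose piece (x : F) : V * V := if valid x
  then (xget 0 (Pc x) - const_mx rho, xget 0 (Pc x) + const_mx rho)
  else emptyb R d.
pose P := map piece (enum F).
exists (fun k => (nth (emptyb R d) P k).1), (fun k => (nth (emptyb R d) P k).2).
split.
  move=> y /= Hy.
  have Hy' : forall i, 0 <= (T y ord0 i - a ord0 i) / th.
    by move=> i; apply: divr_ge0; [have /andP[h _] := Hy i; lra | exact: ltW].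
  pose k (i : 'I_d) := Num.trunc ((T y ord0 i - a ord0 i) / th).
  have trk i := trunc_itv (Hy' i).
  have kn i : (k i < n i)%N.
    have /andP[h1 _] := trk i.
    rewrite -(ltr_nat R); apply: le_lt_trans h1 _.
    rewrite -(ltr_pM2r th0); apply: le_lt_trans (n_gt i).
    rewrite divfK ?gt_eqF //.
    have /andP[_ h] := Hy i; rewrite /s le_max; apply/orP; right.
    lra.
  have kM i : (k i < M)%N.
    rewrite /M ltnS; exact: (leq_trans (ltnW (kn i)) (@leq_bigmax _ n i)).
  pose x : F := [ffun i => inord (k i)].
  have xk i : (x i : nat) = k i by rewrite ffunE inordK.
  have vx : valid x by apply/forallP => i; rewrite xk.
  have Py : Pc x y.
    move=> i; rewrite mxE xk; have /andP[h1 h2] := trk i.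
    rewrite ler_pdivlMr // mulrC in h1.
    have h2' : T y ord0 i - a ord0 i < th * (k i).+1%:R.
      by rewrite mulrC -ltr_pdivrMr.
    move: h1 h2'; rewrite -[(k i).+1]addn1 natrD mulrDr mulr1 /k => h1 h2'.
    apply/andP; split; lra.
  have Pz : Pc x (xget 0 (Pc x)) by apply: xgetPex; exists y.
  exists (index x (enum F)) => //.
  rewrite (nth_map x) ?index_mem ?mem_enum // nth_index ?mem_enum //.
  rewrite /piece vx /= => i.
  have := @piece_bound R d f L gamma Hs g0 gL d0 th y (xget 0 (Pc x)) (corner x)
    (ltW th0) Py Pz i.
  rewrite !mxE -/rho ler_norml => /andP[h1 h2]; apply/andP; split; lra.
rewrite (@eseries_fin R _ (size P)); last first.
  by move=> k Hk; rewrite nth_default // (@vol_empty R d d0).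
rewrite sumEFin lee_fin.
have -> : \sum_(0 <= k < size P) vol (nth (emptyb R d) P k).1 (nth (emptyb R d) P k).2
    = \sum_(pr <- P) vol pr.1 pr.2 by rewrite (big_nth (emptyb R d)).
rewrite big_map big_enum /=.
have vp : forall x : F, vol (piece x).1 (piece x).2
    = \prod_(i < d) ((x i < n i)%N%:R * (2 * rho)).
  move=> x; rewrite /piece; case: ifP => vx.
    apply: eq_bigr => i _; move/forallP: vx => /(_ i) ->.
    rewrite !mxE mul1r.
    have gen : forall z r : R, 0 <= r -> Num.max 0 (z + r - (z - r)) = 2 * r.
      move=> z r r0; have -> : z + r - (z - r) = 2 * r by ring.
      by apply/max_idPr; lra.
    by apply: gen; rewrite /rho; apply: mulr_ge0 (ltW th0); apply: mulr_ge0 => //; exact: ler0n.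
  rewrite (@vol_empty R d d0); move/negbT: vx => /forallPn [i /negbTE Hi].
  by rewrite (bigD1 i) //= Hi mul0r mul0r.
rewrite (eq_bigr _ (fun x _ => vp x)) /=.
rewrite -(bigA_distr_bigA (fun (i : 'I_d) (m : 'I_M) => (m < n i)%N%:R * (2 * rho))) /=.
have nM i : (n i <= M)%N.
  by rewrite /M; apply: leqW; exact: (@leq_bigmax _ n i).
rewrite (eq_bigr (fun i => (4 * d%:R) * ((n i)%:R * th))); last first.
  by move=> i _; rewrite (@sum_ind R) // /rho; ring.
rewrite big_split /= prodr_const card_ord -/K.
have h1 : \prod_(i < d) ((n i)%:R * th) <= \prod_(i < d) (s i + th).
  apply: ler_prod => i _; apply/andP; split; last exact: n_le.
  by apply: mulr_ge0 (ltW th0); exact: ler0n.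
have h2 : \prod_(i < d) (s i + th) <= vol a b + th * d%:R * C.
  have := @prod_cont R (map s (enum 'I_d)) th.
  rewrite !big_map size_map size_enum_ord.
  apply.
    by apply/allP => z /mapP [i _ ->]; exact: s0 i.
  by rewrite (ltW th0) th1.
have h3 := le_trans h1 h2.
have h4 : K * \prod_(i < d) ((n i)%:R * th) <= K * (vol a b + th * d%:R * C).
  exact: ler_wpM2l.
apply: le_trans h4 _; rewrite mulrDr lerD2l.
exact: thb.
Qed.

End P8.

Section P9.
Variables (R : realType) (d : nat).
Local Notation V := 'rV[R]_d.
Local Notation vol := (@box_vol R d).
Local Notation outer := (@lebesgue_outer R d).
Variables (f : V -> R) (L gamma : R).
Hypotheses (Hs : L_smooth f L) (g0 : 0 < gamma) (gL : gamma <= 1 / (2 * L)).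
Hypothesis d0 : (0 < d)%N.
Local Notation T := (@Tmap R d f gamma).

Lemma null_preimage (N : set V) : outer N = 0%E -> outer (T @^-1` N) = 0%E.
Proof.
move=> N0; apply: (@null_of_small R d) => e e0.
pose K := (4 * d%:R) ^+ d : R.
have K0 : 0 <= K by apply: exprn_ge0; apply: mulr_ge0 => //; exact: ler0n.
pose e1 := e / (K + 1).
have e10 : 0 < e1 by apply: divr_gt0 => //; lra.
have [a [b [Nc Sb]]] := @null_cover R d N e1 N0 e10.
have : forall j, exists pq : (nat -> V) * (nat -> V),
   T @^-1` box (a j) (b j) `<=` \bigcup_k box (pq.1 k) (pq.2 k) /\
   (\sum_(0 <= k <oo) (vol (pq.1 k) (pq.2 k))%:E <=
     (K * vol (a j) (b j) + e1 / (2 ^ j.+1)%:R)%:E)%E.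
  move=> j.
  have [|p [q [H1 H2]]] := @preimage_box R d f L gamma Hs g0 gL d0 (a j) (b j)
      (e1 / (2 ^ j.+1)%:R).
    by apply: divr_gt0 => //; rewrite ltr0n expn_gt0.
  by exists (p, q).
move=> /choice [G HG].
apply: (@le_trans _ _ (\sum_(0 <= j <oo) \sum_(0 <= k <oo)
   (vol ((G j).1 k) ((G j).2 k))%:E)%E).
  apply: outer_le_cover2 => y /= /Nc [j _ Hj].
  have [k _ Hk] := proj1 (HG j) y Hj.
  by exists j => //; exists k.
apply: (@le_trans _ _ (\sum_(0 <= j <oo)
   ((K * vol (a j) (b j))%:E + (e1 / (2 ^ j.+1)%:R)%:E))%E).
  apply: lee_nneseries => [j _ _|j _].
    by apply: nneseries_ge0 => k _; rewrite lee_fin vol_ge0.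
  by rewrite -EFinD; exact: (proj2 (HG j)).
have ET := @epsilon_trick R (fun j => (K * vol (a j) (b j))%:E) e1 xpredT.
have A0 : forall j, (0 <= (K * vol (a j) (b j))%:E)%E.
  by move=> j; rewrite lee_fin; apply: mulr_ge0 => //; exact: vol_ge0.
have ET' := ET A0 (ltW e10).
apply: le_trans ET' _.
under eq_eseriesr do rewrite EFinM.
rewrite nneseriesZl; last by move=> j _; rewrite lee_fin vol_ge0.
apply: (@le_trans _ _ (K%:E * e1%:E + e1%:E)%E).
  by rewrite leeD2r // lee_wpmul2l // lee_fin.
rewrite -EFinM -EFinD lee_fin /e1.
have -> : K * (e / (K + 1)) + e / (K + 1) = e * ((K + 1) / (K + 1)) by ring.
have K1 : K + 1 != 0 by apply: lt0r_neq0; lra.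
by rewrite divff ?mulr1.
Qed.

End P9.

Lemma outer0_pos (R : realType) (d : nat) (A : set 'rV[R]_d) :
  lebesgue_outer A = 0%E -> (0 < d)%N.
Proof.
case: d A => [|d] A // A0; exfalso.
have [a [b [_ Hsum]]] := @null_cover R 0 A 1 A0 ltr01.
have v1 : forall k, box_vol (a k) (b k) = 1 by move=> k; rewrite /box_vol big_ord0.
have := @nneseries_lim_ge R (fun k => (box_vol (a k) (b k))%:E) xpredT 0 2.
rewrite !big_nat_recr //= big_geq // !v1 add0e => h.
have := le_trans (h (fun n _ _ => ltac:(by rewrite v1 lee_fin))) Hsum.
rewrite -EFinD lee_fin; lra.
Qed.

Section P10.
Variables (R : realType) (d : nat).
Local Notation V := 'rV[R]_d.
Local Notation outer := (@lebesgue_outer R d).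
Variables (f : V -> R) (L gamma : R).
Hypotheses (Hs : L_smooth f L) (g0 : 0 < gamma) (gL : gamma <= 1 / (2 * L)).
Hypothesis d0 : (0 < d)%N.
Local Notation T := (@Tmap R d f gamma).

Lemma null_iter (t : nat) (N : set V) : outer N = 0%E ->
  outer [set x | N (iter t T x)] = 0%E.
Proof.
elim: t N => [|t IH] N N0 //=.
exact: (IH _ (@null_preimage R d f L gamma Hs g0 gL d0 N N0)).
Qed.

End P10.

Theorem corollary1 (R : realType) (d : nat) (f : 'rV[R]_d -> R) (L gamma : R)
    (X W : set 'rV[R]_d) :
  L_smooth f L ->
  lebesgue_outer X = 0%E ->
  lebesgue_measurable W ->
  (0 < lebesgue_outer W)%E ->
  (lebesgue_outer W < +oo)%E ->
  0 < gamma -> gamma <= 1 / (2 * L) ->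
  gd_uniform_prob W [set x0 | exists t : nat, X (gd f gamma x0 t)] = 0%E.
Proof.
move=> Hs X0 _ _ _ g0 gL.
have d0 := @outer0_pos R d X X0.
rewrite /gd_uniform_prob.
suff -> : lebesgue_outer ([set x0 | exists t : nat, X (gd f gamma x0 t)] `&` W) = 0%E.
  by rewrite mul0e.
apply/eqP; rewrite eq_le outer_ge0 andbT.
apply: le_trans (@outer_mono R d _
   (\bigcup_t [set x | X (iter t (@Tmap R d f gamma) x)]) _) _.
  by move=> x [[t Ht] _]; exists t.
rewrite (@null_bigcup R d) // => t.
exact: (@null_iter R d f L gamma Hs g0 gL d0 t X X0).
Qed.
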